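(* Let $G$ be an edge-maximal $K_{3,3}$-minor free graph of order $n\geq 374$ with $n-3\leq \Delta(G)\leq n-2$. Then $q(G)\leq n+2$.
   Context: All graphs are finite, simple and undirected. $q(G)$ is the largest eigenvalue of the signless Laplacian matrix $Q(G)=D(G)+A(G)$. $\Delta(G)$ is the maximum degree of $G$. A graph $H$ is a minor of $G$ if $H$ can be obtained from $G$ by deleting edges, contracting edges, or deleting vertices; $G$ is $H$-minor free if it has no minor isomorphic to $H$. $G$ is edge-maximal $H$-minor free if $G$ is $H$-minor free and adding any edge joining two nonadjacent vertices of $G$ produces a graph having $H$ as a minor. $K_{3,3}$ is the complete bipartite graph with both parts of size 3. *)

(* Defs.v *)
From HB Require Import structures.
From mathcomp Require Import all_boot all_order all_algebra.
From mathcomp Require Import reals.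
Set Implicit Arguments. Unset Strict Implicit. Unset Printing Implicit Defensive.
Import Order.TTheory GRing.Theory Num.Theory.

Definition simple_graph (T : finType) (g : rel T) : Prop :=
  symmetric g /\ irreflexive g.

Definition connected_in (T : finType) (g : rel T) (S : {set T}) : Prop :=
  forall x y, x \in S -> y \in S ->
    connect [rel a b | g a b && (a \in S) && (b \in S)] x y.

(* H (on U, relation h) is a minor of G (on T, relation g): branch-set model,
   i.e. pairwise disjoint nonempty connected vertex sets, one per vertex of H,
   with a G-edge between the sets of any two adjacent vertices of H. *)
Definition is_minor (U T : finType) (h : rel U) (g : rel T) : Prop :=
  exists phi : U -> {set T},
    [/\ forall u, phi u != set0,
        forall u v, u != v -> [disjoint phi u & phi v],
        forall u, connected_in g (phi u)
      & forall u v, h u v -> exists x y, [/\ x \in phi u, y \in phi v & g x y]].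

Definition minor_free (U T : finType) (h : rel U) (g : rel T) : Prop :=
  ~ is_minor h g.

(* K_{3,3}: vertices (side, index), adjacent iff on different sides. *)
Definition K33 : rel (bool * 'I_3) := fun u v => u.1 != v.1.

Definition add_edge (T : finType) (g : rel T) (x y : T) : rel T :=
  [rel a b | g a b || ((a == x) && (b == y)) || ((a == y) && (b == x))].

Definition edge_maximal_minor_free (U T : finType) (h : rel U) (g : rel T) : Prop :=
  minor_free h g /\
  forall x y, x != y -> ~~ g x y -> is_minor h (add_edge g x y).

Definition deg (T : finType) (g : rel T) (x : T) : nat := #|[set y | g x y]|.

Definition max_deg (n : nat) (g : rel 'I_n) : nat := \max_(x < n) deg g x.

Definition signless_laplacian (R : nzRingType) (n : nat) (g : rel 'I_n) : 'M[R]_n :=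
  \matrix_(i, j) ((if i == j then (deg g i)%:R else 0) + (g i j)%:R)%R.

Definition largest_eigenvalue (R : numFieldType) (n : nat) (A : 'M[R]_n) (l : R) : Prop :=
  eigenvalue A l /\ (forall a, eigenvalue A a -> a <= l)%R.

(* Main.v *)
Require Import Defs.
From mathcomp Require Import all_boot all_order all_algebra.
From mathcomp Require Import reals.
From mathcomp Require Import zify.
From mathcomp.algebra_tactics Require Import ring lra.
Import Order.TTheory GRing.Theory Num.Theory.

Set Implicit Arguments. Unset Strict Implicit. Unset Printing Implicit Defensive.
Section SpecS.
Local Open Scope ring_scope.

Lemma spec_bound (R : realType) n (g : rel 'I_n) (M : R) (c : 'I_n -> R) :
  (forall i, 0 < c i) ->
  (forall i, \sum_(j | g i j) c j <= (M - (deg g i)%:R) * c i) ->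
  forall q, eigenvalue (signless_laplacian R g) q -> q <= M.
Proof.
move=> cpos hc q /eigenvalueP [x hx xnz].
have eqj j : q * x 0 j = (deg g j)%:R * x 0 j + \sum_(i | g i j) x 0 i.
  have := congr1 (fun m : 'rV[R]_n => m 0 j) hx; rewrite !mxE => <-.
  under eq_bigr => i _ do rewrite !mxE mulrDr.
  rewrite big_split /= (bigD1 j) //= eqxx big1 /=; last first.
    by move=> i /negbTE ->; rewrite mulr0.
  rewrite addr0 mulrC; congr (_ + _).
  by rewrite [RHS]big_mkcond /=; apply: eq_bigr => i _; case: (g i j); rewrite ?mulr1 ?mulr0.
have ineq j : (q - (deg g j)%:R) * `|x 0 j| <= \sum_(i | g i j) `|x 0 i|.
  apply: le_trans (ler_norm_sum _ _ _).
  have -> : \sum_(i | g i j) x 0 i = (q - (deg g j)%:R) * x 0 j.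
    by rewrite mulrBl eqj addrC addKr.
  rewrite normrM; apply: ler_wpM2r => //; exact: ler_norm.
have key : \sum_j c j * ((q - (deg g j)%:R) * `|x 0 j|)
          <= \sum_j c j * ((M - (deg g j)%:R) * `|x 0 j|).
  apply: le_trans (_ : \sum_j c j * \sum_(i | g i j) `|x 0 i| <= _).
    by apply: ler_sum => j _; apply: ler_wpM2l; [exact: ltW | exact: ineq].
  have -> : \sum_j c j * \sum_(i | g i j) `|x 0 i|
      = \sum_i `|x 0 i| * \sum_(j | g i j) c j.
    rewrite (eq_bigr (fun j => \sum_i (if g i j then c j * `|x 0 i| else 0))); last first.
      move=> j _; rewrite big_distrr /= [LHS]big_mkcond /=; apply: eq_bigr => i _.
      by case: (g i j).
    rewrite exchange_big /=; apply: eq_bigr => i _.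
    rewrite big_distrr /= [RHS]big_mkcond /=; apply: eq_bigr => j _.
    by case: (g i j); rewrite // mulrC.
  apply: ler_sum => i _.
  rewrite [X in _ <= X]mulrA [X in _ <= X]mulrC (mulrC (c i)).
  by apply: ler_wpM2l; [exact: normr_ge0 | exact: hc].
have pos : 0 < \sum_j c j * `|x 0 j|.
  have [j xj] : exists j, x 0 j != 0.
    apply/existsP; move: xnz; apply: contraR; rewrite negb_exists => /forallP h.
    by apply/eqP/rowP => j; rewrite mxE; apply/eqP; move: (h j); rewrite negbK.
  rewrite (bigD1 j) //=; apply: ltr_pwDl; last first.
    by apply: sumr_ge0 => i _; apply: mulr_ge0; [exact: ltW|].
  by apply: mulr_gt0 => //; rewrite normr_gt0.
have : (q - M) * \sum_j c j * `|x 0 j| <= 0.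
  rewrite big_distrr /= -subr_le0 in key *.
  rewrite -sumrB in key; apply: le_trans key; rewrite le_eqVlt; apply/orP; left; apply/eqP.
  by apply: eq_bigr => j _; rewrite -!mulrBr -!mulrBl opprB addrA subrK mulrCA mulrC. 
by rewrite pmulr_lle0 // subr_le0.
Qed.

End SpecS.


Definition sel3 (T : Type) (x1 x2 x3 : T) (i : 'I_3) : T :=
  if val i == 0 then x1 else if val i == 1 then x2 else x3.

Lemma sel3_inj (T : eqType) (x1 x2 x3 : T) :
  x1 != x2 -> x2 != x3 -> x3 != x1 -> injective (sel3 x1 x2 x3).
Proof.
move=> d12 d23 d31 [[|[|[|i]]] Hi] [[|[|[|j]]] Hj] //= H; try (by apply: val_inj);
  rewrite /sel3 /= in H; subst;
  by rewrite ?eqxx in d12 d23 d31.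
Qed.

Lemma sel3_cases (T : Type) (x1 x2 x3 : T) (P : T -> Prop) :
  P x1 -> P x2 -> P x3 -> forall i, P (sel3 x1 x2 x3 i).
Proof. by move=> h1 h2 h3 [[|[|[|i]]] Hi] //=. Qed.

Lemma F2 n (g : rel 'I_n) : simple_graph g -> minor_free K33 g ->
  forall a1 a2 a3, a1 != a2 -> a2 != a3 -> a3 != a1 ->
  #|[set y | g a1 y && g a2 y && g a3 y]| <= 2.
Proof.
move=> [gs gi] mf a1 a2 a3 d12 d23 d31; rewrite leqNgt; apply/negP.
move=> /card_gt2P [z1 [z2 [z3 [[h1 h2 h3] [e12 e23 e31]]]]].
rewrite !inE in h1 h2 h3.
set a := sel3 a1 a2 a3; set z := sel3 z1 z2 z3.
have hz : forall k, g a1 (z k) && g a2 (z k) && g a3 (z k).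
  by apply: (@sel3_cases _ z1 z2 z3 (fun y => g a1 y && g a2 y && g a3 y)).
have adj : forall i k, g (a i) (z k).
  move=> i k; move: (hz k) => /andP[/andP[H1 H2] H3].
  by apply: (@sel3_cases _ a1 a2 a3 (fun x => g x (z k))).
pose f (u : bool * 'I_3) := if u.1 then z u.2 else a u.2.
have finj : injective f.
  move=> [[] i] [[] j] /=; rewrite /f /=.
  - by move=> /(sel3_inj e12 e23 e31) ->.
  - by move=> H; move: (adj j i); rewrite -H gi.
  - by move=> H; move: (adj i j); rewrite H gi.
  - by move=> /(sel3_inj d12 d23 d31) ->.
apply: mf; exists (fun u => [set f u]); split.
- by move=> u; apply/set0Pn; exists (f u); rewrite inE.
- move=> u v nuv; rewrite disjoints1 inE; apply: contra nuv => /eqP /finj ->; exact: eqxx.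
- by move=> u x y; rewrite !inE => /eqP -> /eqP ->; exact: connect0.
- move=> [[] i] [[] j] //= _.
    exists (f (true, i)), (f (false, j)); rewrite !inE /f /=.
    by split => //; rewrite (gs (z i)) adj.
  by exists (f (false, i)), (f (true, j)); rewrite !inE /f /=.
Qed.


Section G.
Variables (n : nat) (g : rel 'I_n).
Hypothesis gsimp : simple_graph g.
Hypothesis mf : minor_free K33 g.

Lemma gsym : symmetric g. Proof. by case: gsimp. Qed.
Lemma girr : irreflexive g. Proof. by case: gsimp. Qed.

Lemma card_le_n (A : {set 'I_n}) : #|A| <= n.
Proof. by rewrite -[X in _ <= X]card_ord max_card. Qed.

Lemma cardCN v : #|~: [set y | g v y]| = n - deg g v.
Proof. by rewrite /deg -[X in X - _](card_ord n) -(cardsC [set y | g v y]) addKn. Qed.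

Lemma sub_card_deg u (P : pred 'I_n) : #|[set y | g u y && P y]| <= deg g u.
Proof. by apply: subset_leq_card; apply/subsetP => y; rewrite !inE => /andP[]. Qed.

Lemma L3 u w v : u != w -> w != v -> v != u ->
  #|[set y | g u y && g w y]| <= 2 + #|~: [set y | g v y]|.
Proof.
move=> d1 d2 d3.
have := F2 gsimp mf d1 d2 d3.
have sub : [set y | g u y && g w y] \subset
           [set y | g u y && g w y && g v y] :|: ~: [set y | g v y].
  by apply/subsetP => y; rewrite !inE; case: (g v y); rewrite ?andbT ?orbT ?orbF.
move=> h; apply: leq_trans (subset_leq_card sub) _.
by apply: leq_trans (leq_card_setU _ _) _; rewrite leq_add2r.
Qed.

Lemma sum_ind (P Q : pred 'I_n) : \sum_(j | P j) (Q j : nat) = #|[set j | P j && Q j]|.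
Proof.
rewrite -sum1dep_card big_mkcondr /=; apply: eq_bigr => j _; by case: (Q j).
Qed.

Lemma sum_eq1 (u : 'I_n) (a : nat) : \sum_k ((k == u) * a) = a.
Proof.
by rewrite (bigD1 u) //= eqxx mul1n big1 ?addn0 // => k /negbTE ->.
Qed.

Lemma L5 u v : u != v -> #|~: [set y | g v y]| <= 3 ->
  \sum_(y | g u y) deg g y <= 2 * deg g u + 5 * n.
Proof.
move=> uv hC.
have e1 : \sum_(y | g u y) deg g y = \sum_(y | g u y) \sum_k (g y k : nat).
  apply: eq_bigr => y _; rewrite /deg -sum1dep_card big_mkcond /=.
  by apply: eq_bigr => k _; case: (g y k).
rewrite e1 exchange_big /=.
have bnd : forall k, \sum_(y | g u y) (g y k : nat) <=
    (k == u) * deg g u + (k == v) * deg g u + 5.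
  move=> k; rewrite sum_ind.
  have -> : [set y | g u y && g y k] = [set y | g u y && g k y].
    by apply/setP => y; rewrite !inE (gsym y k).
  case: (eqVneq k u) => [->|ku]; first by rewrite /= mul1n; apply: leq_trans (sub_card_deg _ _) _; lia.
  case: (eqVneq k v) => [->|kv]; first by rewrite /= mul1n mul0n add0n; apply: leq_trans (sub_card_deg _ _) _; lia.
  rewrite /= !mul0n !add0n.
  apply: leq_trans (L3 _ _ _) _; [by rewrite eq_sym | exact: kv | by rewrite eq_sym |].
  by rewrite (_ : 5 = 2 + 3) // leq_add2l.
apply: (@leq_trans (\sum_k ((k == u) * deg g u + (k == v) * deg g u + 5))).
  by apply: leq_sum => k _; exact: bnd.
rewrite !big_split /= !sum_eq1 sum_nat_const card_ord.
by lia.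
Qed.

Lemma NI a b : [set y | g a y] :&: [set y | g b y] = [set y | g a y && g b y].
Proof. by apply/setP => y; rewrite !inE. Qed.

Lemma L6 b1 b2 v : b1 != b2 -> b1 != v -> b2 != v -> #|~: [set y | g v y]| <= 3 ->
  n + 6 <= 2 * deg g b1 -> n + 6 <= 2 * deg g b2 -> False.
Proof.
move=> d12 d1 d2 hC h1 h2.
have d3 : v != b1 by rewrite eq_sym.
have l3 := L3 d12 d2 d3.
have e := cardsUI [set y | g b1 y] [set y | g b2 y].
rewrite NI in e.
have c := card_le_n ([set y | g b1 y] :|: [set y | g b2 y]).
move: l3 e c h1 h2 hC; rewrite /deg.
set S := #|[set y | g b1 y && g b2 y]|.
set A := #|[set y | g b1 y]|.
set B := #|[set y | g b2 y]|.
set U := #|_ :|: _|.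
set C := #|~: _|.
lia.
Qed.

Lemma L7 u b : u != b -> deg g u <= #|[set y | g u y && g b y]| + (n - deg g b).
Proof.
move=> ub; rewrite -cardCN.
have sub : [set y | g u y] \subset [set y | g u y && g b y] :|: ~: [set y | g b y].
  by apply/subsetP => y; rewrite !inE; case: (g b y); rewrite ?andbT ?orbT ?orbF.
exact: leq_trans (subset_leq_card sub) (leq_card_setU _ _).
Qed.
End G.

Section RealS.
Local Open Scope ring_scope.

Lemma U_poly (R : realType) (n d h r A D : R) : 374 <= n -> 0 <= d -> 2*d <= n+5 ->
  0 <= r -> r <= 3/4 -> 0 <= h -> d*h <= d + 21/4 -> A <= d + 5*r -> D <= 2*d + 5*n ->
  n*n*h + n*A + n*d/8 + 5*D <= (n + 2 - d) * (n*h + n/8 + 5*d).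
Proof.
move=> n374 d0 dn r0 r34 h0 dh hA hD.
have n0 : 0 <= n by lra.
have H1 : n * (d*h) <= n * (d + 21/4) by apply: ler_wpM2l.
have H2 : n * A <= n * (d + 5*r) by apply: ler_wpM2l.
have H4 : d * (2*d) <= d * (n+5) by apply: ler_wpM2l.
have H5 : n * r <= n * (3/4) by apply: ler_wpM2l.
have H6 : 0 <= n * h by apply: mulr_ge0.
have H7 : 374 * n <= n * n by rewrite [n * n]mulrC; apply: ler_wpM2r.
have H8 : 0 <= d * n by apply: mulr_ge0.
nra.
Qed.

Lemma U_ineq (R : realType) (n d h r A D : R) : 374 <= n -> 0 <= d -> 2*d <= n+5 ->
  0 <= r -> r <= 3/4 -> 0 <= h -> d*h <= d + 21/4 -> A <= d + 5*r -> D <= 2*d + 5*n ->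
  h + (A + d/8 + 5*D/n)/n <= (n + 2 - d) * ((h + 1/8 + 5*d/n)/n).
Proof.
move=> n374 d0 dn r0 r34 h0 dh hA hD.
have P := U_poly n374 d0 dn r0 r34 h0 dh hA hD.
have nn : n != 0 by apply/negP => /eqP n0; rewrite n0 in n374; lra.
have nnp : 0 < n * n by apply: mulr_gt0; lra.
have -> : h + (A + d/8 + 5*D/n)/n = (n*n*h + n*A + n*d/8 + 5*D) / (n*n) by field.
have -> : (n + 2 - d) * ((h + 1/8 + 5*d/n)/n) = (n + 2 - d) * (n*h + n/8 + 5*d) / (n*n) by field.
by rewrite ler_pM2r // invr_gt0.
Qed.

Lemma V_ineq (R : realType) (n De r A D Y : R) : 374 <= n -> 0 <= De -> De <= n - 2 ->
  0 <= r -> A <= De + r*n -> D <= De*Y + n -> 0 <= Y ->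
  ((r <= 3/20 /\ 2*Y <= n+5) \/ (r <= 3/4 /\ Y <= 18)) ->
  r + (A + De/8 + 5*D/n)/n <= n + 2 - De.
Proof.
move=> n374 De0 Den r0 hA hD Y0 hc.
have nn : n != 0 by apply/negP => /eqP n0; rewrite n0 in n374; lra.
have nnp : 0 < n * n by apply: mulr_gt0; lra.
have n0 : 0 <= n by lra.
suff P : r*(n*n) + n*A + n*De/8 + 5*D <= (n + 2 - De)*(n*n).
  have -> : r + (A + De/8 + 5*D/n)/n = (r*(n*n) + n*A + n*De/8 + 5*D) / (n*n) by field.
  have -> : n + 2 - De = (n + 2 - De)*(n*n) / (n*n) by field.
  by rewrite ler_pM2r // invr_gt0.
have H2 : n * A <= n * (De + r*n) by apply: ler_wpM2l.
have H3 : De * Y <= n * Y by apply: ler_wpM2r; lra.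
have H4 : 4 * (n*n) <= (n + 2 - De) * (n*n) by apply: ler_wpM2r; lra.
have H5 : De * n <= n * n by apply: ler_wpM2r; lra.
have H7 : 374 * n <= n * n by rewrite [n * n]mulrC; apply: ler_wpM2r.
case: hc => [[hr hY]|[hr hY]].
  have H6 : r * (n*n) <= 3/20 * (n*n) by apply: ler_wpM2r; lra.
  have H8 : n * (2*Y) <= n * (n+5) by apply: ler_wpM2l.
  nra.
have H6 : r * (n*n) <= 3/4 * (n*n) by apply: ler_wpM2r; lra.
have H8 : n * Y <= n * 18 by apply: ler_wpM2l.
nra.
Qed.

Lemma B_ineq (R : realType) (n db r A D : R) : 374 <= n -> 0 <= db -> db <= n - 2 ->
  r * (n + 1 - db) = 9/4 -> 0 <= r -> A <= db + r*db -> D <= 2*db + 5*n ->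
  1 + (A + db/8 + 5*D/n)/n <= (n + 2 - db) * r.
Proof.
move=> n374 db0 dbn hr r0 hA hD.
have nn : n != 0 by apply/negP => /eqP n0; rewrite n0 in n374; lra.
have nnp : 0 < n * n by apply: mulr_gt0; lra.
have n0 : 0 <= n by lra.
suff P : n*n + n*A + n*db/8 + 5*D <= (n + 2 - db)*r*(n*n).
  have -> : 1 + (A + db/8 + 5*D/n)/n = (n*n + n*A + n*db/8 + 5*D) / (n*n) by field.
  have -> : (n + 2 - db) * r = (n + 2 - db)*r*(n*n) / (n*n) by field.
  by rewrite ler_pM2r // invr_gt0.
have -> : (n + 2 - db)*r = 9/4 + r by rewrite -hr; ring.
have H2 : n * A <= n * (db + r*db) by apply: ler_wpM2l.
have H3 : r * db <= r * n by apply: ler_wpM2l; lra.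
have H3' : n * (r * db) <= n * (r * n) by apply: ler_wpM2l.
have H5 : db * n <= n * n by apply: ler_wpM2r; lra.
have H7 : 374 * n <= n * n by rewrite [n * n]mulrC; apply: ler_wpM2r.
nra.
Qed.

End RealS.

Section M.
Variable R : realType.
Local Open Scope ring_scope.

Lemma sum_pred1R n (P : pred 'I_n) (a : 'I_n) :
  \sum_(j | P j) (((j == a) : nat)%:R : R) = ((P a : nat)%:R).
Proof.
rewrite big_mkcond (bigD1 a) //= eqxx big1 => [|j ja].
  by case: (P a); rewrite ?addr0.
by case: (P j) => //; case: eqP ja.
Qed.

Lemma sum_lin n (P : pred 'I_n) (a b d : 'I_n -> R) (r nR : R) :
  \sum_(j | P j) ((a j + r * b j + 1/8 + 5 * d j / nR) / nR) =
  (\sum_(j | P j) a j + r * \sum_(j | P j) b j + (\sum_(j | P j) 1)/8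
     + 5 * (\sum_(j | P j) d j) / nR) / nR.
Proof.
rewrite -mulr_suml; congr (_ * _).
rewrite !big_split /= mulr_sumr; congr (_ + _ + _ + _).
  by rewrite mulr_suml; apply: eq_bigr => j _; rewrite mul1r.
by rewrite mulr_sumr mulr_suml.
Qed.

Lemma sum1R n (P : pred 'I_n) : \sum_(j | P j) (1 : R) = (#|[set j | P j]|)%:R.
Proof. by rewrite -sum1dep_card natr_sum; apply: eq_bigr. Qed.


Lemma generic n (g : rel 'I_n) (v b : 'I_n) (r Y : R) :
  simple_graph g -> minor_free K33 g -> (374 <= n)%N ->
  (n - 3 <= deg g v)%N -> (deg g v <= n - 2)%N -> (forall x, deg g x <= deg g v)%N ->
  0 <= r -> r <= 3/4 ->
  ((b = v /\ r = 0) \/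
   (b != v /\ (n + 6 <= 2 * deg g b)%N /\ r * (n%:R + 1 - (deg g b)%:R) = 9/4)) ->
  (forall u, u != v -> u != b -> 2 * deg g u <= n + 5)%N ->
  (forall u, u != v -> u != b -> r * (#|[set j | g u j && g j b]|)%:R <= 5 * r) ->
  (forall u, u != v -> u != b -> g u b -> r * (deg g u)%:R <= 21/4) ->
  0 <= Y -> (forall u, u != v -> u != b -> (deg g u)%:R <= Y) ->
  ((r <= 3/20 /\ 2*Y <= n%:R + 5) \/ (r <= 3/4 /\ Y <= 18)) ->
  forall q, eigenvalue (signless_laplacian R g) q -> q <= n%:R + 2.
Proof.
move=> gs mf n374 dlo dhi dmax r0 r34 hb hnh hA5 hrd Y0 hY hcase.
have hC : (#|~: [set y | g v y]| <= 3)%N by rewrite cardCN; lia.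
set nR : R := n%:R.
have nR374 : 374 <= nR by rewrite /nR ler_nat.
have nR0 : 0 < nR by lra.
pose w x := (((g x v : nat)%:R + r * (g x b : nat)%:R + 1/8 + 5 * (deg g x)%:R / nR) / nR).
pose c x := if x == v then 1 else if x == b then r else w x.
have w0 : forall x, 0 < w x.
  move=> x; rewrite /w; apply: divr_gt0 => //.
  have : 0 <= (g x v : nat)%:R + r * (g x b : nat)%:R :> R by apply: addr_ge0; [|apply: mulr_ge0].
  have : 0 <= 5 * (deg g x)%:R / nR :> R by apply: divr_ge0 => //; apply: mulr_ge0; [lra|].
  lra.
have rpos : b != v -> 0 < r.
  move=> bv; case: hb => [[ebv _]|[_ [_ hr]]]; first by rewrite ebv eqxx in bv.
  rewrite lt_def r0 andbT; apply/eqP => r00; rewrite r00 mul0r in hr; lra.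
have cpos : forall x, 0 < c x.
  move=> x; rewrite /c; case: eqP => // xv; case: eqP => [xb|_]; last exact: w0.
  by apply: rpos; rewrite -xb; apply/eqP.
have cle : forall x, c x <= ((x == v) : nat)%:R + r * ((x == b) : nat)%:R + w x.
  move=> x; rewrite /c; have := w0 x; case: eqP => [_|xv] /=.
    have : 0 <= r * ((x == b) : nat)%:R by apply: mulr_ge0.
    lra.
  case: eqP => [_|_] /=; lra.
have sumc : forall u, \sum_(j | g u j) c j <=
    (g u v : nat)%:R + r * (g u b : nat)%:R + \sum_(j | g u j) w j.
  move=> u; apply: le_trans (ler_sum _ (fun j _ => cle j)) _.
  by rewrite !big_split /= sum_pred1R -mulr_sumr sum_pred1R.
have sumw : forall u, \sum_(j | g u j) w j =
   ((#|[set j | g u j && g j v]|)%:R + r * (#|[set j | g u j && g j b]|)%:R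
     + (deg g u)%:R/8 + 5 * (\sum_(j | g u j) deg g j)%:R / nR) / nR.
  move=> u; rewrite /w sum_lin sum1R -!natr_sum !sum_ind.
  by [].
have gi := girr gs.
have L5R : forall u, u != v ->
    (\sum_(j | g u j) deg g j)%:R <= 2 * (deg g u)%:R + 5 * nR :> R.
  move=> u uv; have := L5 gs mf uv hC; rewrite -(ler_nat R) natrD !natrM.
  by [].
have degn : forall u, (deg g u)%:R <= nR - 2 :> R.
  move=> u; have : (deg g u + 2 <= n)%N by have := dmax u; lia.
  by rewrite -(ler_nat R) natrD /nR => h; lra.
have deg0 : forall u, 0 <= (deg g u)%:R :> R by move=> u; apply: ler0n.
have cardR : forall u (P : pred 'I_n), (#|[set j | g u j && P j]|)%:R <= (deg g u)%:R :> R.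
  by move=> u P; rewrite ler_nat; apply: sub_card_deg.
have cardn : forall (A : {set 'I_n}), (#|A|)%:R <= nR :> R.
  by move=> A; rewrite ler_nat; apply: card_le_n.
have bool1 : forall (bb : bool), (bb : nat)%:R <= 1 :> R by case.
have bool0 : forall (bb : bool), 0 <= (bb : nat)%:R :> R by case.
apply: (spec_bound (c := c)) => // i.
case: (eqVneq i v) => [->|iv].
  rewrite /c eqxx mulr1; apply: le_trans (sumc v) _.
  rewrite sumw gi /=.
  set A := (#|_|)%:R + _.
  set D := (\sum_(j | g v j) deg g j)%:R.
  have hA : A <= (deg g v)%:R + r * nR.
    rewrite /A; apply: lerD; first exact: cardR.
    by apply: ler_wpM2l => //; apply: cardn.
  have hD : D <= (deg g v)%:R * Y + nR.
    rewrite /D natr_sum.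
    apply: le_trans (_ : _ <= \sum_(j | g v j) (Y + ((j == b) : nat)%:R * nR)) _.
      apply: ler_sum => j gvj; case: (eqVneq j b) => [->|jb] /=.
        rewrite mul1r; have := degn b; lra.
      rewrite mul0r addr0; apply: hY => //; apply/eqP => jv; by rewrite jv gi in gvj.
    rewrite big_split /= -mulr_suml sum_pred1R.
    have -> : \sum_(j | g v j) Y = Y * (deg g v)%:R.
      by rewrite -[Y]mulr1 -mulr_sumr sum1R mulr1.
    have := bool1 (g v b); have := deg0 v; nra.
  have hV := V_ineq nR374 (deg0 v) (degn v) r0 hA hD Y0 hcase.
  apply: le_trans hV; rewrite add0r lerD2r.
  by rewrite -[X in _ <= X]mulr1; apply: ler_wpM2l.
case: (eqVneq i b) => [eib|ib].
  rewrite eib in iv *.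
  have hr : r * (nR + 1 - (deg g b)%:R) = 9/4.
    by case: hb => [[ebv _]|[_ [_ hr]]]; [rewrite ebv eqxx in iv | exact: hr].
  rewrite /c (negbTE iv) eqxx.
  apply: le_trans (sumc b) _.
  rewrite sumw gi /= mulr0 addr0.
  set A := (#|_|)%:R + _.
  set D := (\sum_(j | g b j) deg g j)%:R.
  have hA : A <= (deg g b)%:R + r * (deg g b)%:R.
    by rewrite /A; apply: lerD; [exact: cardR | apply: ler_wpM2l => //; exact: cardR].
  have hD : D <= 2 * (deg g b)%:R + 5 * nR by apply: L5R.
  have hB := B_ineq nR374 (deg0 b) (degn b) hr r0 hA hD.
  apply: le_trans hB; rewrite lerD2r; exact: bool1.
rewrite /c (negbTE iv) (negbTE ib).
apply: le_trans (sumc i) _.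
rewrite sumw /w.
set A := (#|_|)%:R + _.
set D := (\sum_(j | g i j) deg g j)%:R.
have hA : A <= (deg g i)%:R + 5 * r.
  by rewrite /A; apply: lerD; [exact: cardR | exact: hA5].
have hD : D <= 2 * (deg g i)%:R + 5 * nR by apply: L5R.
have h2d : 2 * (deg g i)%:R <= nR + 5.
  by have := hnh i iv ib; rewrite -(ler_nat R) natrD natrM.
have h0 : 0 <= (g i v : nat)%:R + r * (g i b : nat)%:R.
  by apply: addr_ge0 => //; apply: mulr_ge0.
have dh : (deg g i)%:R * ((g i v : nat)%:R + r * (g i b : nat)%:R) <= (deg g i)%:R + 21/4.
  have := deg0 i; have := hrd i iv ib.
  case: (g i b) => /= H; case: (g i v) => /=; rewrite ?mulr1n ?mulr0n; nra.
exact: (U_ineq nR374 (deg0 i) h2d r0 r34 h0 dh hA hD).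
Qed.

End M.

Unset Implicit Arguments. Set Strict Implicit. Set Printing Implicit Defensive.

Theorem lemma4p2 (R : realType) (n : nat) (g : rel 'I_n) :
  simple_graph g ->
  edge_maximal_minor_free K33 g ->
  374 <= n ->
  n - 3 <= max_deg g <= n - 2 ->
  forall q : R, largest_eigenvalue (signless_laplacian R g) q ->
  (q <= n%:R + 2)%R.
Proof.
move=> gs [mf _] n374 /andP[lo hi] q [hq _].
have n0 : (0 < #|'I_n|)%N by rewrite card_ord; lia.
have [v hv] := @bigop.eq_bigmax (ordinal n) (fun x => deg g x) n0.
have dmax : forall x, (deg g x <= deg g v)%N.
  by move=> x; rewrite -hv; apply: (leq_bigmax x).
rewrite /max_deg hv in lo hi.
have hC : (#|~: [set y | g v y]| <= 3)%N by rewrite cardCN; lia.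
have nR374 : (374 <= n%:R :> R)%R by rewrite ler_nat.
case: (boolP [exists b, (b != v) && (n + 6 <= 2 * deg g b)]) =>
   [/existsP [b /andP [bv hbig]] | /existsPn nob].
  have dbn : (deg g b + 2 <= n)%N by have := dmax b; lia.
  pose s : R := (n%:R + 1 - (deg g b)%:R)%R.
  have s3 : (3 <= s)%R.
    by move: dbn; rewrite -(ler_nat R) natrD /s => h; lra.
  pose r : R := (9/4 / s)%R.
  have sp : (0 < s)%R by apply: lt_le_trans s3.
  have hr : (r * s = 9/4)%R by rewrite /r divfK // gt_eqF.
  have r0 : (0 <= r)%R by rewrite /r; apply: divr_ge0; lra.
  have r34 : (r <= 3/4)%R by nra.
  have hnh : forall u, u != v -> u != b -> (2 * deg g u <= n + 5)%N.
    move=> u uv ub; rewrite leqNgt; apply/negP => h.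
    by apply: (L6 gs mf ub uv bv hC) => //; lia.
  have c5 : forall u, u != v -> u != b -> (#|[set j | g u j && g j b]| <= 5)%N.
    move=> u uv ub.
    have -> : [set j | g u j && g j b] = [set j | g u j && g b j].
      by apply/setP => j; rewrite !inE (gsym gs j b).
    have vu : v != u by rewrite eq_sym.
    by apply: leq_trans (L3 gs mf ub bv vu) _; lia.
  have hA5 : forall u, u != v -> u != b ->
      (r * (#|[set j | g u j && g j b]|)%:R <= 5 * r)%R.
    move=> u uv ub; rewrite mulrC; apply: ler_wpM2r => //.
    by have := c5 u uv ub; rewrite -(ler_nat R).
  have degb : forall u, u != v -> u != b -> (deg g u <= 5 + (n - deg g b))%N.
    move=> u uv ub; apply: leq_trans (L7 g ub) _.
    have := c5 u uv ub.
    have -> : [set j | g u j && g j b] = [set j | g u j && g b j].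
      by apply/setP => j; rewrite !inE (gsym gs j b).
    lia.
  have degbR : forall u, u != v -> u != b -> ((deg g u)%:R <= s + 4 :> R)%R.
    move=> u uv ub; have := degb u uv ub.
    have -> : (5 + (n - deg g b) = (n - deg g b) + 5)%N by lia.
    rewrite -(ler_nat R) natrD natrB; last by lia.
    by rewrite /s => h; lra.
  have hrd : forall u, u != v -> u != b -> g u b -> (r * (deg g u)%:R <= 21/4)%R.
    move=> u uv ub _; have := degbR u uv ub; have := ler0n R (deg g u); nra.
  case: (leqP n (deg g b + 13)) => hbn.
    apply: (@generic R n g v b r 18 gs mf n374 _ _ dmax r0 r34 _ hnh hA5 hrd _ _ _ q hq).
    - by lia.
    - by lia.
    - by right; split => //; split => //.
    - by lra.
    - move=> u uv ub; have := degb u uv ub; rewrite -(ler_nat R) => h.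
      apply: le_trans h _; rewrite ler_nat; lia.
    - by right; split => //; lra.
  have s15 : (15 <= s)%R.
    have h14 : (deg g b + 14 <= n)%N by lia.
    by move: h14; rewrite -(ler_nat R) natrD /s => h; lra.
  apply: (@generic R n g v b r ((n%:R + 5)/2) gs mf n374 _ _ dmax r0 r34 _ hnh hA5 hrd _ _ _ q hq).
  - by lia.
  - by lia.
  - by right; split => //; split => //.
  - by lra.
  - move=> u uv ub; have := hnh u uv ub; rewrite -(ler_nat R) natrD natrM => h; lra.
  - by left; split; [nra | lra].
have hnh : forall u, u != v -> u != v -> (2 * deg g u <= n + 5)%N.
  move=> u uv _; have := nob u; rewrite uv /= -ltnNge; lia.
apply: (@generic R n g v v 0 ((n%:R + 5)/2) gs mf n374 _ _ dmax _ _ _ hnh _ _ _ _ _ q hq).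
- by lia.
- by lia.
- by [].
- by lra.
- by left.
- by move=> u _ _; rewrite mul0r mulr0.
- by move=> u _ _ _; rewrite mul0r; lra.
- by lra.
- move=> u uv _; have := hnh u uv uv; rewrite -(ler_nat R) natrD natrM => h; lra.
- by left; split; lra.
Qed.
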